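(* Let $Q=(\mathcal S,|\cdot|,q)$ be a quasi-reversible queueing system satisfying Assumption 1 with finite $\mathcal S$, let $\Pi$ be a stationary measure of $Q$, and let $r:\mathcal S\to\mathbb R$, $R:\mathcal S\times\mathcal S\to\mathbb R$ be reward functions. For an admission policy $\gamma$ let $G_\gamma=\sum_{s}\Pi_\gamma(s)r(s)+\sum_{s,t}\Pi_\gamma(s)q_\gamma(s,t)R(s,t)$, where $\Pi_\gamma$ is the unique stationary distribution of $q_\gamma$. Then there exists a Ferrers set $\mathcal A\subseteq|\mathcal S|$ such that the deterministic policy $\gamma^{\mathcal A}_i(s)=\mathbf 1\{|s|+e_i\in\mathcal A\}$ (which is balanced, with balance function $\mathbf 1_{\mathcal A}$) satisfies $G_{\gamma^{\mathcal A}}\ge G_\gamma$ for every balanced admission policy $\gamma$. Equivalently, the function $\Gamma_{\mathcal A}(x)=\frac1Z\mathbf 1\{x\in\mathcal A\}$, $Z=\sum_{s:|s|\in\mathcal A}\Pi(s)$, is an optimal solution of the linear program: maximize over $\Gamma:|\mathcal S|\to\mathbb R$ $$\sum_{s\in\mathcal S}\Pi(s)\Gamma(|s|)r(s)+\sum_{s\in\mathcal S}\sum_{i=1}^n\sum_{t\in\mathcal S_{|s|+e_i}}\Pi(s)\Gamma(|s|+e_i)q(s,t)R(s,t)+\sum_{s\in\mathcal S}\sum_{t\notin\bigcup_i\mathcal S_{|s|+e_i}}\Pi(s)\Gamma(|s|)q(s,t)R(s,t)$$ subject to $\Gamma(x)\ge0$ for all $x$, $\Gamma(x)\ge\Gamma(x+e_i)$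 whenever $x,x+e_i\in|\mathcal S|$, and $\sum_{s\in\mathcal S}\Pi(s)\Gamma(|s|)=1$.
   Context: $e_i$ is the $i$-th unit vector; $\le$ componentwise; a Ferrers set $\mathcal X\subseteq\mathbb N^n$ contains $0$ and every $y\in\mathbb N^n$ with $y\le x$ for some $x\in\mathcal X$. Queueing system $Q=(\mathcal S,|\cdot|,q)$: $\mathcal S$ countable, $|\cdot|:\mathcal S\to\mathbb N^n$, $|\mathcal S|$ Ferrers, unique $\varnothing$ with $|\varnothing|=0$, $q$ a CTMC rate kernel with $q(s,t)=0$ unless $t\in\mathcal S_{|s|}\cup\bigcup_i(\mathcal S_{|s|+e_i}\cup\mathcal S_{|s|-e_i})$, $\mathcal S_x=\{s:|s|=x\}$. Assumption 1: there is $\mathcal S_{\mathrm{rec}}$ with (1) every $s\in\mathcal S_{\mathrm{rec}}$ reachable from $\varnothing$ by a positive-rate path along which $|\cdot|$ is non-decreasing; (2) no $s\notin\mathcal S_{\mathrm{rec}}$ reachable from $\varnothing$; (3) from every $s$ a positive-rate path to $\varnothing$ along which $|\cdot|$ is non-increasing; (4) $|\mathcal S_{\mathrm{rec}}|$ Ferrers. Quasi-reversibility: stationary measures satisfy $\Pi(s)\sum_{t\in\mathcal S_{|s|+e_i}}q(s,t)=\sum_{t\in\mathcal S_{|s|+e_i}}\Pi(t)q(t,s)$ for all $s,i$. An admission policy is $\gamma:\mathcal S\to[0,1]^n$; $q_\gamma(s,t)=q(s,t)\gamma_i(s)$ if $t\in\mathcal S_{|s|+e_i}$, $q_\gamma(s,t)=q(s,t)$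 otherwise. A policy is balanced if it is microstate-independent ($\gamma(s)=\gamma(t)$ whenever $|s|=|t|$, so it is viewed as a function of $x=|s|$) and there exists $\Gamma:|\mathcal S|\to\mathbb R_{\ge0}$ with $\Gamma(0)=1$ and $\Gamma(x)\gamma_i(x)=\Gamma(x+e_i)$ whenever $x,x+e_i\in|\mathcal S|$. *)

(* Defs.v *)
From HB Require Import structures.
From mathcomp Require Import all_boot all_order all_algebra.
From mathcomp Require Import reals.
Set Implicit Arguments. Unset Strict Implicit. Unset Printing Implicit Defensive.
Import Order.TTheory GRing.Theory Num.Theory.
Local Open Scope ring_scope.

Definition vec (n : nat) := {ffun 'I_n -> nat}.
Definition vzero n : vec n := [ffun _ => 0%N].
Definition unitv n (i : 'I_n) : vec n := [ffun j => nat_of_bool (j == i)].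
Definition vadd n (x y : vec n) : vec n := [ffun j => (x j + y j)%N].
Definition vle n (x y : vec n) : bool := [forall j, (x j <= y j)%N].

Definition ferrers n (X : vec n -> Prop) : Prop :=
  X (vzero n) /\ forall x y : vec n, X x -> vle y x -> X y.

Section Queue.
Variables (R : realType) (n : nat) (S : finType) (sz : S -> vec n).

Definition img_sz (x : vec n) : Prop := exists s, sz s = x.

Definition queueing_system (emp : S) (q : S -> S -> R) : Prop :=
  ferrers img_sz /\
  sz emp = vzero n /\ (forall s, sz s = vzero n -> s = emp) /\
  (forall s t, 0 <= q s t) /\
  (forall s t, q s t != 0 ->
     sz t = sz s \/ exists i, sz t = vadd (sz s) (unitv i)
                           \/ sz s = vadd (sz t) (unitv i)).

Definition step_pos (q : S -> S -> R) : rel S := fun a b => 0 < q a b.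
Definition step_up (q : S -> S -> R) : rel S :=
  fun a b => (0 < q a b) && vle (sz a) (sz b).
Definition step_down (q : S -> S -> R) : rel S :=
  fun a b => (0 < q a b) && vle (sz b) (sz a).

Definition reach (e : rel S) (s t : S) : Prop :=
  exists p : seq S, path e s p /\ last s p = t.

Definition assumption1 (emp : S) (q : S -> S -> R) : Prop :=
  exists Srec : S -> Prop,
    (forall s, Srec s -> reach (step_up q) emp s) /\
    (forall s, ~ Srec s -> ~ reach (step_pos q) emp s) /\
    (forall s, reach (step_down q) s emp) /\
    ferrers (fun x => exists s, Srec s /\ sz s = x).

Definition stationary (k : S -> S -> R) (P : S -> R) : Prop :=
  (forall s, 0 <= P s) /\
  forall t, P t * (\sum_u k t u) = \sum_s P s * k s t.

Definition stationary_measure (k : S -> S -> R) (P : S -> R) : Prop :=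
  stationary k P /\ exists s, P s != 0.

Definition stationary_distribution (k : S -> S -> R) (P : S -> R) : Prop :=
  stationary k P /\ \sum_s P s = 1.

Definition quasi_reversible (q : S -> S -> R) : Prop :=
  forall P, stationary_measure q P ->
  forall s (i : 'I_n),
    P s * (\sum_(t | sz t == vadd (sz s) (unitv i)) q s t)
    = \sum_(t | sz t == vadd (sz s) (unitv i)) P t * q t s.

Definition admission_policy (g : S -> 'I_n -> R) : Prop :=
  forall s i, 0 <= g s i <= 1.

Definition qpol (q : S -> S -> R) (g : S -> 'I_n -> R) (s t : S) : R :=
  q s t * (if [pick i | sz t == vadd (sz s) (unitv i)] is Some i
           then g s i else 1).

Definition balanced (g : S -> 'I_n -> R) : Prop :=
  (forall s t, sz s = sz t -> forall i, g s i = g t i) /\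
  exists Gam : vec n -> R,
    Gam (vzero n) = 1 /\
    (forall x, img_sz x -> 0 <= Gam x) /\
    (forall s i, img_sz (vadd (sz s) (unitv i)) ->
        Gam (sz s) * g s i = Gam (vadd (sz s) (unitv i))).

Definition det_policy (A : pred (vec n)) (s : S) (i : 'I_n) : R :=
  if A (vadd (sz s) (unitv i)) then 1 else 0.

Definition Greward (r : S -> R) (Rw : S -> S -> R) (k : S -> S -> R)
  (P : S -> R) : R :=
  \sum_s P s * r s + \sum_s \sum_t P s * k s t * Rw s t.

Definition is_arrival (s t : S) : bool :=
  [exists i : 'I_n, sz t == vadd (sz s) (unitv i)].

Definition lp_objective (q : S -> S -> R) (Pi : S -> R) (r : S -> R)
  (Rw : S -> S -> R) (Gam : vec n -> R) : R :=
  \sum_s Pi s * Gam (sz s) * r s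
  + \sum_s \sum_(i < n) \sum_(t | sz t == vadd (sz s) (unitv i))
        Pi s * Gam (vadd (sz s) (unitv i)) * q s t * Rw s t
  + \sum_s \sum_(t | ~~ is_arrival s t) Pi s * Gam (sz s) * q s t * Rw s t.

Definition lp_feasible (Pi : S -> R) (Gam : vec n -> R) : Prop :=
  (forall x, img_sz x -> 0 <= Gam x) /\
  (forall x (i : 'I_n), img_sz x -> img_sz (vadd x (unitv i)) ->
      Gam (vadd x (unitv i)) <= Gam x) /\
  \sum_s Pi s * Gam (sz s) = 1.

Definition lp_optimal q Pi r Rw (Gam : vec n -> R) : Prop :=
  lp_feasible Pi Gam /\
  forall Gam', lp_feasible Pi Gam' ->
    lp_objective q Pi r Rw Gam' <= lp_objective q Pi r Rw Gam.

Definition GammaA (Pi : S -> R) (A : pred (vec n)) (x : vec n) : R :=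
  (if A x then 1 else 0) / (\sum_(s | A (sz s)) Pi s).

End Queue.

(* Main.v *)
Require Import Defs.
From HB Require Import structures.
From mathcomp Require Import all_boot all_order all_algebra.
From mathcomp Require Import reals.
From mathcomp Require Import ring lra boolp.
Import Order.TTheory GRing.Theory Num.Theory.
Local Open Scope ring_scope.
Set Implicit Arguments. Unset Strict Implicit. Unset Printing Implicit Defensive.

Lemma fin_max (R : realType) (T : finType) (P : pred T) (f : T -> R) x0 :
  P x0 -> exists2 x, P x & forall y, P y -> f y <= f x.
Proof.
move=> Px0. case: (@arg_maxP _ _ T x0 P f Px0) => x Px H.
by exists x.
Qed.

Lemma fin_min (R : realType) (T : finType) (P : pred T) (f : T -> R) x0 :
  P x0 -> exists2 x, P x & forall y, P y -> f x <= f y.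
Proof.
move=> Px0. case: (@fin_max R T P (fun x => - f x) x0 Px0) => x Px H.
exists x => // y Py; rewrite -lerN2; exact: H.
Qed.

Section Uniq.
Variables (R : realType) (S : finType) (k : S -> S -> R).
Hypothesis k_ge0 : forall s t, 0 <= k s t.

Definition epos : rel S := fun a b => 0 < k a b.

Lemma prop_step (P : S -> R) s t : stationary k P -> 0 < P s -> 0 < k s t -> 0 < P t.
Proof.
case=> P0 bal Ps kst.
have H : 0 < \sum_s' P s' * k s' t.
  rewrite (bigD1 s) //=; apply: (@lt_le_trans _ _ (P s * k s t)); first exact: mulr_gt0.
  rewrite lerDl; apply: sumr_ge0 => u _; exact: mulr_ge0.
rewrite -bal in H; rewrite lt0r P0 andbT; apply/negP => /eqP Pt0.
by move: H; rewrite Pt0 mul0r ltxx.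
Qed.

Lemma prop_path (P : S -> R) s p : stationary k P -> 0 < P s ->
  path epos s p -> 0 < P (last s p).
Proof.
move=> st; elim: p s => [|y p IH] s //= Ps /andP[ksy pa].
apply: IH => //. exact: (prop_step st Ps ksy).
Qed.

Variable emp : S.
Hypothesis reach_emp : forall s, reach (fun a b => 0 < k a b) s emp.

Definition C := connect epos emp.

Lemma supp_C (P : S -> R) s : stationary k P -> ~~ C s -> P s = 0.
Proof.
move=> st; have [P0 bal] := st.
have closed t u : C t -> 0 < k t u -> C u.
  move=> Ct ktu; apply: connect_trans Ct _; exact: connect1.
have flow : \sum_(t | C t) \sum_(s | ~~ C s) P s * k s t = 0.
  have E1 : \sum_(t | C t) P t * (\sum_u k t u) =
            \sum_(t | C t) \sum_(u | C u) P t * k t u.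
    apply: eq_bigr => t Ct; rewrite (bigID C) /= mulrDr.
    rewrite [X in _ + X](_ : _ = 0) ?addr0; first by rewrite mulr_sumr.
    rewrite big1 ?mulr0 // => u nCu; apply/eqP; rewrite eq_le k_ge0 andbT.
    rewrite leNgt; apply/negP => /(closed _ _ Ct) Cu; by rewrite Cu in nCu.
  have E2 : \sum_(t | C t) P t * (\sum_u k t u) =
            \sum_(t | C t) \sum_(s | C s) P s * k s t +
            \sum_(t | C t) \sum_(s | ~~ C s) P s * k s t.
    rewrite -big_split /=; apply: eq_bigr => t Ct; by rewrite bal (bigID C).
  move: E2; rewrite E1 exchange_big /=.
  move=> H; lra.
have zero s' t : ~~ C s' -> C t -> P s' * k s' t = 0.
  move=> nCs Ct.
  have H := psumr_eq0P (fun t _ => sumr_ge0 _ (fun s _ => mulr_ge0 (P0 s) (k_ge0 s t))) flow Ct.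
  exact: (psumr_eq0P (fun s _ => mulr_ge0 (P0 s) (k_ge0 s t)) H nCs).
move=> nCs; apply/eqP; rewrite eq_le P0 andbT leNgt; apply/negP => Ps.
have [p [pa lst]] := reach_emp s.
elim: p s nCs Ps pa lst => [|y p IH] s' nCs Ps /=.
  by move=> _ E; rewrite E /C connect0 in nCs.
case/andP => ksy pa lst.
case Cy: (C y).
  have := zero _ _ nCs Cy => /eqP; rewrite mulf_eq0 => /orP[] /eqP E.
  - by rewrite E ltxx in Ps.
  - by rewrite /= E ltxx in ksy.
apply: (IH y) => //; first by rewrite Cy.
exact: (prop_step st Ps ksy).
Qed.

Lemma pos_dist (P : S -> R) s : stationary_distribution k P -> C s -> 0 < P s.
Proof.
case=> st sum1 Cs.
have [s1 Ps1] : exists s1, 0 < P s1.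
  case: (pickP (fun s => 0 < P s)) => [s1 Ps1|none]; first by exists s1.
  have : \sum_s P s = 0.
    apply: big1 => u _; apply/eqP; rewrite eq_le st.1 andbT leNgt; by rewrite none.
  by rewrite sum1 => /eqP; rewrite oner_eq0.
have Pe : 0 < P emp.
  have [p [pa lst]] := reach_emp s1.
  rewrite -lst; exact: (prop_path st Ps1 pa).
case/connectP: Cs => p pa ->; exact: (prop_path st Pe pa).
Qed.

Lemma stat_lin (P1 P2 : S -> R) (a : R) :
  stationary k P1 -> stationary k P2 -> (forall s, 0 <= P2 s - a * P1 s) ->
  stationary k (fun s => P2 s - a * P1 s).
Proof.
move=> [_ b1] [_ b2] H; split=> // t.
rewrite mulrBl b2 -mulrA b1 mulr_sumr -sumrB; apply: eq_bigr => u _.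
by rewrite mulrBl mulrA.
Qed.

Lemma uniq_dist (P1 P2 : S -> R) : stationary_distribution k P1 ->
  stationary_distribution k P2 -> forall s, P2 s = P1 s.
Proof.
move=> d1 d2.
have Cemp : C emp by rewrite /C connect0.
have [s0 Cs0 Hmin] := fin_min (fun s => P2 s / P1 s) Cemp.
set lam := P2 s0 / P1 s0.
have D0 s : 0 <= P2 s - lam * P1 s.
  case Cs: (C s).
    have p1 := pos_dist d1 Cs.
    have := Hmin s Cs; rewrite /lam subr_ge0 ler_pdivlMr //.
  by rewrite (supp_C d1.1 (negbT Cs)) (supp_C d2.1 (negbT Cs)) mulr0 subr0.
have stD := stat_lin d1.1 d2.1 D0.
have Ds0 : P2 s0 - lam * P1 s0 = 0.
  have p1 := pos_dist d1 Cs0; rewrite /lam mulfVK ?subrr //; exact: lt0r_neq0.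
have Dz s : P2 s - lam * P1 s = 0.
  apply/eqP; rewrite eq_le D0 andbT leNgt; apply/negP => Ds.
  have [p [pa lst]] := reach_emp s.
  have De := prop_path stD Ds pa; rewrite lst in De.
  case/connectP: Cs0 => p' pa' E.
  have := prop_path stD De pa'; rewrite -E Ds0 ltxx //.
have lam1 : lam = 1.
  have : \sum_s P2 s = lam * \sum_s P1 s.
    rewrite mulr_sumr; apply: eq_bigr => u _; apply/eqP; rewrite -subr_eq0; exact/eqP.
  by rewrite d1.2 d2.2 mulr1.
by move=> s; have := Dz s; rewrite lam1 mul1r => /eqP; rewrite subr_eq0 => /eqP.
Qed.
End Uniq.

Section Vec.
Variable n : nat.
Implicit Types x y : vec n.

Lemma vle_refl x : vle x x.
Proof. by apply/forallP => j. Qed.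

Lemma vle_add x i : vle x (vadd x (unitv i)).
Proof. by apply/forallP => j; rewrite !ffunE leq_addr. Qed.

Lemma vle_add_not x i : ~~ vle (vadd x (unitv i)) x.
Proof.
apply/negP => /forallP /(_ i); rewrite !ffunE eqxx /=; by rewrite addn1 ltnn.
Qed.

Lemma vle_trans x y z : vle x y -> vle y z -> vle x z.
Proof.
move=> /forallP H1 /forallP H2; apply/forallP => j; exact: leq_trans (H1 j) (H2 j).
Qed.

Lemma vle0 y : vle y (vzero n) -> y = vzero n.
Proof.
move=> /forallP H; apply/ffunP => j; rewrite ffunE; have := H j; rewrite ffunE.
by rewrite leqn0 => /eqP.
Qed.

Lemma vadd_inj x i j : vadd x (unitv i) = vadd x (unitv j) -> i = j.
Proof.
move=> E; have := congr1 (fun f : vec n => f i) E; rewrite !ffunE eqxx /=.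
by move/eqP; rewrite eqn_add2l; case: (i == j) /eqP.
Qed.

Definition vdec x (j : 'I_n) : vec n := [ffun k => (x k - nat_of_bool (k == j))%N].

Lemma vdecK x j : (0 < x j)%N -> vadd (vdec x j) (unitv j) = x.
Proof.
move=> H; apply/ffunP => k; rewrite !ffunE.
case: (eqVneq k j) => [->|] /=; last by rewrite subn0 addn0.
by rewrite subnK.
Qed.

Lemma vle_dec y x j : vle y x -> (y j < x j)%N -> vle y (vdec x j).
Proof.
move=> /forallP H lt; apply/forallP => k; rewrite ffunE.
case: (eqVneq k j) => [->|] /=; last by rewrite subn0 H.
by rewrite subn1 -ltnS prednK // (leq_ltn_trans _ lt).
Qed.

Lemma vsum_dec x j : (0 < x j)%N -> (\sum_k vdec x j k < \sum_k x k)%N.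
Proof.
move=> H; rewrite (bigD1 j) //= [X in (_ < X)%N](bigD1 j) //= ffunE eqxx /=.
rewrite (eq_bigr (fun k => x k)); last first.
  by move=> k /negbTE kj; rewrite ffunE kj subn0.
by rewrite ltn_add2r subn1 prednK // ltnSn.
Qed.

Lemma vneq_lt x y : vle y x -> x != y -> exists j, (y j < x j)%N.
Proof.
move=> /forallP H neq.
case: (pickP (fun j => (y j < x j)%N)) => [j Hj|none]; first by exists j.
case/negP: neq; apply/eqP/ffunP => j; apply/eqP; rewrite eqn_leq H /=.
by rewrite leqNgt none.
Qed.
End Vec.

Section Q.
Variables (R : realType) (n : nat) (S : finType) (sz : S -> vec n).
Variables (q : S -> S -> R) (Pi : S -> R).

Lemma arr_vle s t : is_arrival sz s t -> ~~ vle (sz t) (sz s).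
Proof. by case/existsP => i /eqP ->; exact: vle_add_not. Qed.

Lemma sum_arr s (F : S -> R) :
  \sum_(t | is_arrival sz s t) F t =
  \sum_(i < n) \sum_(t | sz t == vadd (sz s) (unitv i)) F t.
Proof.
rewrite (exchange_big_dep (fun t => is_arrival sz s t)) /=; last first.
  by move=> i t _ E; apply/existsP; exists i.
apply: eq_bigr => t /existsP [i Ei].
rewrite (big_pred1 i) // => j /=; apply/eqP/eqP => [E|->]; last exact/eqP.
by apply: (@vadd_inj _ (sz s)); rewrite -(eqP Ei) -E.
Qed.

Lemma qpolK g (G : vec n -> R) s t :
  (forall i, img_sz sz (vadd (sz s) (unitv i)) -> G (sz s) * g s i = G (vadd (sz s) (unitv i))) ->
  G (sz s) * qpol sz q g s t = q s t * (if is_arrival sz s t then G (sz t) else G (sz s)).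
Proof.
move=> HK; rewrite /qpol; case: pickP => [i /eqP E|none].
  have -> : is_arrival sz s t by apply/existsP; exists i; rewrite E.
  rewrite mulrCA (HK i) -?E //; by exists t.
have -> : is_arrival sz s t = false.
  by apply/negbTE/existsP => -[i]; rewrite none.
by rewrite mulr1 mulrC.
Qed.

Hypothesis q_ge0 : forall s t, 0 <= q s t.
Hypothesis q_struct : forall s t, q s t != 0 ->
     sz t = sz s \/ exists i, sz t = vadd (sz s) (unitv i)
                           \/ sz s = vadd (sz t) (unitv i).
Hypothesis QR : quasi_reversible sz q.
Hypothesis PiSt : stationary_measure q Pi.

Lemma h_swap (G : vec n -> R) s t :
  q s t * (if is_arrival sz s t then G (sz t) else G (sz s)) =
  q s t * (if is_arrival sz t s then G (sz s) else G (sz t)).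
Proof.
case: (eqVneq (q s t) 0) => [->|nz]; first by rewrite !mul0r.
case: (q_struct nz) => [E|[i [E|E]]].
- by rewrite E; case: ifP; case: ifP.
- have a1 : is_arrival sz s t by apply/existsP; exists i; rewrite E.
  have a2 : is_arrival sz t s = false.
    apply/negbTE/negP => /arr_vle; by rewrite E vle_add.
  by rewrite a1 a2.
- have a1 : is_arrival sz t s by apply/existsP; exists i; rewrite E.
  have a2 : is_arrival sz s t = false.
    apply/negbTE/negP => /arr_vle; by rewrite E vle_add.
  by rewrite a1 a2.
Qed.

Lemma QRsum t (f : vec n -> R) :
  \sum_(u | is_arrival sz t u) Pi t * q t u * f (sz u) =
  \sum_(u | is_arrival sz t u) Pi u * q u t * f (sz u).
Proof.
rewrite !sum_arr; apply: eq_bigr => i _.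
rewrite (eq_bigr (fun u => f (vadd (sz t) (unitv i)) * (Pi t * q t u))); last first.
  by move=> u /eqP ->; rewrite mulrC.
rewrite [RHS](eq_bigr (fun u => f (vadd (sz t) (unitv i)) * (Pi u * q u t))); last first.
  by move=> u /eqP ->; rewrite mulrC.
by rewrite -!mulr_sumr QR.
Qed.

Lemma stat_prod g (G : vec n -> R) :
  (forall s, 0 <= G (sz s)) ->
  (forall s i, img_sz sz (vadd (sz s) (unitv i)) -> G (sz s) * g s i = G (vadd (sz s) (unitv i))) ->
  stationary (qpol sz q g) (fun s => Pi s * G (sz s)).
Proof.
move=> G0 HK; have [[Pi0 bal] _] := PiSt.
split=> [s|t]; first exact: mulr_ge0.
have L1 : Pi t * G (sz t) * \sum_u qpol sz q g t u =
   \sum_(u | is_arrival sz t u) Pi t * q t u * G (sz u) +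
   \sum_(u | ~~ is_arrival sz t u) Pi t * q t u * G (sz t).
  rewrite -mulrA mulr_sumr mulr_sumr (bigID (is_arrival sz t)) /=.
  congr (_ + _); apply: eq_bigr => u au; rewrite (qpolK u (HK t)) ?(negbTE au) ?au; ring.
have R1 : \sum_s Pi s * G (sz s) * qpol sz q g s t =
   \sum_(s | is_arrival sz t s) Pi s * q s t * G (sz s) +
   \sum_(s | ~~ is_arrival sz t s) Pi s * q s t * G (sz t).
  rewrite (bigID (is_arrival sz t)) /=.
  congr (_ + _); apply: eq_bigr => s au; rewrite -mulrA (qpolK t (HK s)) h_swap ?(negbTE au) ?au; ring.
have N1 : \sum_(u | ~~ is_arrival sz t u) Pi t * q t u =
          \sum_(s | ~~ is_arrival sz t s) Pi s * q s t.
  have := bal t; rewrite mulr_sumr (bigID (is_arrival sz t)) /=.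
  rewrite [X in _ = X](bigID (is_arrival sz t)) /=.
  have := QRsum t (fun _ => 1); rewrite !(eq_bigr _ (fun _ _ => mulr1 _)) => ->.
  by move/addrI.
rewrite L1 R1 QRsum; congr (_ + _).
by rewrite -!mulr_suml N1.
Qed.
End Q.

Section L.
Variables (R : realType) (n : nat) (S : finType) (sz : S -> vec n).
Variables (q : S -> S -> R) (Pi : S -> R) (r : S -> R) (Rw : S -> S -> R).

Definition Lo := lp_objective sz q Pi r Rw.
Definition Nf (G : vec n -> R) := \sum_s Pi s * G (sz s).

Lemma G_eq g (G : vec n -> R) :
  (forall s i, img_sz sz (vadd (sz s) (unitv i)) -> G (sz s) * g s i = G (vadd (sz s) (unitv i))) ->
  Greward r Rw (qpol sz q g) (fun s => Pi s * G (sz s)) = Lo G.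
Proof.
move=> HK; rewrite /Greward /Lo /lp_objective -addrA; congr (_ + _).
rewrite -big_split; apply: eq_bigr => s _ /=.
rewrite (bigID (is_arrival sz s)) /= sum_arr; congr (_ + _).
  apply: eq_bigr => i _; apply: eq_bigr => t /eqP E.
  have ar : is_arrival sz s t by apply/existsP; exists i; rewrite E.
  rewrite -(mulrA (Pi s)) (qpolK q t (HK s)) ar E; ring.
apply: eq_bigr => t ar.
rewrite -(mulrA (Pi s)) (qpolK q t (HK s)) (negbTE ar); ring.
Qed.


Lemma L_ext (G1 G2 : vec n -> R) : (forall s, G1 (sz s) = G2 (sz s)) -> Lo G1 = Lo G2.
Proof.
move=> H; rewrite /Lo /lp_objective; congr (_ + _ + _).
- by apply: eq_bigr => s _; rewrite H.
- apply: eq_bigr => s _; apply: eq_bigr => i _; apply: eq_bigr => t /eqP E.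
  by rewrite -E H.
- by apply: eq_bigr => s _; apply: eq_bigr => t _; rewrite H.
Qed.

Lemma L_lin (a b : R) (G1 G2 : vec n -> R) :
  Lo (fun x => a * G1 x + b * G2 x) = a * Lo G1 + b * Lo G2.
Proof.
rewrite /Lo /lp_objective.
have E1 : \sum_s Pi s * (a * G1 (sz s) + b * G2 (sz s)) * r s =
  a * \sum_s Pi s * G1 (sz s) * r s + b * \sum_s Pi s * G2 (sz s) * r s.
  rewrite !mulr_sumr -big_split; apply: eq_bigr => s _ /=; ring.
have E2 : \sum_s \sum_(i < n) \sum_(t | sz t == vadd (sz s) (unitv i))
    Pi s * (a * G1 (vadd (sz s) (unitv i)) + b * G2 (vadd (sz s) (unitv i))) * q s t * Rw s t =
  a * (\sum_s \sum_(i < n) \sum_(t | sz t == vadd (sz s) (unitv i))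
    Pi s * G1 (vadd (sz s) (unitv i)) * q s t * Rw s t) +
  b * (\sum_s \sum_(i < n) \sum_(t | sz t == vadd (sz s) (unitv i))
    Pi s * G2 (vadd (sz s) (unitv i)) * q s t * Rw s t).
  rewrite !mulr_sumr -big_split; apply: eq_bigr => s _ /=.
  rewrite !mulr_sumr -big_split; apply: eq_bigr => i _ /=.
  rewrite !mulr_sumr -big_split; apply: eq_bigr => t _ /=; ring.
have E3 : \sum_s \sum_(t | ~~ is_arrival sz s t)
    Pi s * (a * G1 (sz s) + b * G2 (sz s)) * q s t * Rw s t =
  a * (\sum_s \sum_(t | ~~ is_arrival sz s t) Pi s * G1 (sz s) * q s t * Rw s t) +
  b * (\sum_s \sum_(t | ~~ is_arrival sz s t) Pi s * G2 (sz s) * q s t * Rw s t).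
  rewrite !mulr_sumr -big_split; apply: eq_bigr => s _ /=.
  rewrite !mulr_sumr -big_split; apply: eq_bigr => t _ /=; ring.
rewrite E1 E2 E3; ring.
Qed.

Lemma N_ext (G1 G2 : vec n -> R) : (forall s, G1 (sz s) = G2 (sz s)) -> Nf G1 = Nf G2.
Proof. by move=> H; apply: eq_bigr => s _; rewrite H. Qed.

Lemma N_lin (a b : R) (G1 G2 : vec n -> R) :
  Nf (fun x => a * G1 x + b * G2 x) = a * Nf G1 + b * Nf G2.
Proof. rewrite /Nf !mulr_sumr -big_split; apply: eq_bigr => s _ /=; ring. Qed.

End L.

Lemma vle0x n (x : vec n) : vle (vzero n) x.
Proof. by apply/forallP => j; rewrite ffunE. Qed.

Lemma le_sum_vec n (x : vec n) j : (x j <= \sum_k x k)%N.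
Proof. by rewrite (bigD1 j) //= leq_addr. Qed.

Section LP.
Variables (R : realType) (n : nat) (S : finType) (sz : S -> vec n).
Variables (q : S -> S -> R) (Pi : S -> R) (r : S -> R) (Rw : S -> S -> R).
Variable emp : S.
Hypothesis imgF : ferrers (img_sz sz).
Hypothesis sz_emp : sz emp = vzero n.
Hypothesis Pi0 : forall s, 0 <= Pi s.
Hypothesis Pie : 0 < Pi emp.

Lemma mono_le (G : vec n -> R) :
  (forall x i, img_sz sz x -> img_sz sz (vadd x (unitv i)) -> G (vadd x (unitv i)) <= G x) ->
  forall x y, img_sz sz x -> vle y x -> G x <= G y.
Proof.
move=> Hm; have [_ imgD] := imgF.
suff H : forall k (x y : vec n), (\sum_j x j <= k)%N -> img_sz sz x -> vle y x -> G x <= G y.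
  move=> x y; exact: (H _ x y (leqnn _)).
elim=> [|k IH] x y Hk ix yx; case: (eqVneq x y) => [->//|neq];
  have [j lt] := vneq_lt yx neq.
  have := leq_trans (le_sum_vec x j) Hk; by rewrite leqn0 => /eqP E; rewrite E in lt.
have pos : (0 < x j)%N by apply: leq_ltn_trans lt.
have xK := vdecK pos.
have ix' : img_sz sz (vdec x j).
  apply: imgD ix _; rewrite -[X in vle _ X]xK; exact: vle_add.
apply: le_trans (IH _ y _ ix' (vle_dec yx lt)).
  by have := Hm _ j ix'; rewrite xK => /(_ ix).
by rewrite -ltnS; apply: leq_trans (vsum_dec pos) Hk.
Qed.

Definition AB (B : {set S}) : pred (vec n) := fun x => [exists s in B, sz s == x].
Definition ind (A : pred (vec n)) : vec n -> R := fun x => if A x then 1 else 0.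

Lemma Nf_ind (A : pred (vec n)) : Nf sz Pi (ind A) = \sum_(s | A (sz s)) Pi s.
Proof.
rewrite /Nf [RHS]big_mkcond. apply: eq_bigr => s _; rewrite /ind; case: ifP => _;
  by rewrite ?mulr1 ?mulr0.
Qed.

Lemma Nf_pos (A : pred (vec n)) : A (vzero n) -> 0 < Nf sz Pi (ind A).
Proof.
move=> A0; rewrite Nf_ind (bigD1 emp) /=; last by rewrite sz_emp.
apply: lt_le_trans Pie _; rewrite lerDl; exact: sumr_ge0.
Qed.

Lemma lp_opt : exists A : pred (vec n),
  ferrers (fun x => A x) /\ (forall x, A x -> img_sz sz x) /\
  lp_optimal sz q Pi r Rw (GammaA sz Pi A).
Proof.
pose FB (B : {set S}) := `[< ferrers (fun x => AB B x) >].
pose ratio (B : {set S}) := Lo sz q Pi r Rw (ind (AB B)) / Nf sz Pi (ind (AB B)).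
have FB0 : FB [set emp].
  apply/asboolP; split.
    by apply/existsP; exists emp; rewrite in_set1 eqxx sz_emp eqxx.
  move=> x y /existsP [s /andP [] ]; rewrite in_set1 => /eqP -> /eqP <-.
  rewrite sz_emp => /vle0 ->; apply/existsP; exists emp.
  by rewrite in_set1 eqxx sz_emp eqxx.
have [Bs FBs Hmax] := fin_max ratio FB0.
set A := AB Bs.
set rho := ratio Bs.
have ferA : ferrers (fun x => A x) by apply/asboolP.
have key B : FB B -> Lo sz q Pi r Rw (ind (AB B)) <= rho * Nf sz Pi (ind (AB B)).
  move=> FBB; have Np : 0 < Nf sz Pi (ind (AB B)).
    by apply: Nf_pos; have [] := (asboolP _ FBB).
  rewrite -ler_pdivrMr //; exact: Hmax.
have zcase (G : vec n -> R) : (forall s, G (sz s) = 0) ->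
    Lo sz q Pi r Rw G = 0 /\ Nf sz Pi G = 0.
  move=> H; have E s : G (sz s) = 0 * G (sz s) + 0 * G (sz s) by rewrite H; ring.
  split.
    by rewrite (@L_ext _ _ _ sz q Pi r Rw _ (fun x => 0 * G x + 0 * G x)) // L_lin; ring.
  by rewrite (@N_ext _ _ _ sz Pi _ (fun x => 0 * G x + 0 * G x)) // N_lin; ring.
have zc (G : vec n -> R) : (forall s, 0 <= G (sz s)) -> (forall s, (0 < G (sz s)) = false) ->
    Lo sz q Pi r Rw G <= rho * Nf sz Pi G.
  move=> G0 none.
  have Z s : G (sz s) = 0 by apply/eqP; rewrite eq_le G0 andbT leNgt none.
  by have [-> ->] := zcase G Z; rewrite mulr0.
have main : forall m (G : vec n -> R), (#|[set s | (0 < G (sz s))%R]| <= m)%N ->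
   (forall s, 0 <= G (sz s)) ->
   (forall x i, img_sz sz x -> img_sz sz (vadd x (unitv i)) -> G (vadd x (unitv i)) <= G x) ->
   Lo sz q Pi r Rw G <= rho * Nf sz Pi G.
  elim=> [|m IH] G Hc G0 Gm;
    (case: (pickP (fun s => 0 < G (sz s))) => [s1 Gs1 | none]; last by exact: zc G G0 none).
    have : s1 \in [set s | 0 < G (sz s)] by rewrite inE.
    by move: Hc; rewrite leqn0 cards_eq0 => /eqP ->; rewrite inE.
  pose B := [set s | 0 < G (sz s)].
  have Bs1 : s1 \in B by rewrite inE.
  have [s0 Bs0 Hmin] := @fin_min R S (fun s => s \in B) (fun s => G (sz s)) s1 Bs1.
  pose c := G (sz s0).
  have cpos : 0 < c by move: Bs0; rewrite inE.
  have ABsz s : AB B (sz s) = (0 < G (sz s)).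
    apply/existsP/idP => [[s' /andP [Bs' /eqP E]]|H].
      by rewrite -E; rewrite inE in Bs'.
    by exists s; rewrite inE H eqxx.
  have Gz : 0 < G (vzero n).
    apply: lt_le_trans Gs1 _; apply: (mono_le Gm) => //; [by exists s1 | exact: vle0x].
  have FBB : FB B.
    apply/asboolP; split; first by rewrite -sz_emp ABsz sz_emp.
    move=> x y /existsP [s /andP [Bss /eqP E]] yx.
    have [_ imgD] := imgF.
    have [s' E'] : img_sz sz y by apply: imgD yx; exists s.
    rewrite -E' ABsz; rewrite -E' in yx; apply: (lt_le_trans _ (mono_le Gm _ yx)); last by exists s.
    by rewrite -E; rewrite inE in Bss.
  pose G' := fun x => G x - c * ind (AB B) x.
  have G'0 s : 0 <= G' (sz s).
    rewrite /G' /ind ABsz; case: ifP => h.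
      by rewrite mulr1 subr_ge0; apply: Hmin; rewrite inE.
    by rewrite mulr0 subr0.
  have G'm x i : img_sz sz x -> img_sz sz (vadd x (unitv i)) -> G' (vadd x (unitv i)) <= G' x.
    move=> [s E] [t Et]; rewrite -Et -E.
    have Gst : G (sz t) <= G (sz s) by rewrite Et -E; apply: Gm; [exists s | exists t; rewrite E].
    case: (boolP (0 < G (sz t))) => ht.
      have hs : 0 < G (sz s) by apply: lt_le_trans Gst.
      by rewrite /G' /ind !ABsz ht hs lerD2r.
    have Gt0 : G (sz t) = 0 by apply/eqP; rewrite eq_le G0 andbT leNgt.
    by rewrite {1}/G' /ind ABsz (negbTE ht) Gt0 mulr0 subr0.
  have Hc' : (#|[set s | (0 < G' (sz s))%R]| <= m)%N.
    rewrite -ltnS; apply: leq_trans Hc; apply: proper_card; apply/properP; split.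
      apply/subsetP => s; rewrite !inE /G' /ind ABsz; case: ifP => // h; by rewrite ?mulr0 ?subr0 ?h.
    exists s0 => //; rewrite inE /G' /ind ABsz; move: Bs0; rewrite inE => ->.
    by rewrite mulr1 subrr ltxx.
  have IHG := IH G' Hc' G'0 G'm.
  have Edec s : G (sz s) = 1 * G' (sz s) + c * ind (AB B) (sz s) by rewrite /G'; ring.
  rewrite (@L_ext _ _ _ sz q Pi r Rw _ (fun x => 1 * G' x + c * ind (AB B) x)) // (L_lin sz q Pi r Rw 1 c G' (ind (AB B))).
  rewrite (@N_ext _ _ _ sz Pi _ (fun x => 1 * G' x + c * ind (AB B) x)) // (N_lin sz Pi 1 c G' (ind (AB B))).
  rewrite !mul1r (mulrDr rho); apply: lerD => //; rewrite mulrCA ler_pM2l //; exact: key.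
exists A; split => //; split.
  by move=> x /existsP [s /andP [_ /eqP E]]; exists s.
have Zp : 0 < Nf sz Pi (ind A) by apply: Nf_pos; exact: ferA.1.
have gA x : GammaA sz Pi A x = (Nf sz Pi (ind A))^-1 * ind A x + 0 * ind A x.
  by rewrite /GammaA -Nf_ind mul0r addr0 mulrC.
have LgA : Lo sz q Pi r Rw (GammaA sz Pi A) = rho.
  rewrite (@L_ext _ _ _ sz q Pi r Rw _ (fun x => (Nf sz Pi (ind A))^-1 * ind A x + 0 * ind A x)) //.
  by rewrite L_lin mul0r addr0 mulrC.
have NgA : Nf sz Pi (GammaA sz Pi A) = 1.
  rewrite (@N_ext _ _ _ sz Pi _ (fun x => (Nf sz Pi (ind A))^-1 * ind A x + 0 * ind A x)) //.
  by rewrite N_lin mul0r addr0 mulVf // lt0r_neq0.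
split.
  split; [|split]; last exact: NgA.
    move=> x _; rewrite gA mul0r addr0; apply: mulr_ge0; first by rewrite invr_ge0 ltW.
    by rewrite /ind; case: ifP.
  move=> x i _ _; rewrite !gA !mul0r !addr0 ler_pM2l ?invr_gt0 // /ind.
  case: ifP => h; last by case: ifP.
  by rewrite (ferA.2 _ _ h (vle_add x i)).
move=> G' [G0' [Gm' N1]].
have H := main _ G' (leqnn _) (fun s => G0' (sz s) (ex_intro _ s erefl)) Gm'.
rewrite /Nf N1 mulr1 -LgA in H; exact: H.
Qed.


End LP.

Unset Implicit Arguments.

Theorem mainTheorem7 (R : realType) (n : nat) (S : finType)
  (sz : S -> vec n) (emp : S) (q : S -> S -> R) (Pi : S -> R)
  (r : S -> R) (Rw : S -> S -> R) :
  queueing_system sz emp q ->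
  assumption1 sz emp q ->
  quasi_reversible sz q ->
  stationary_measure q Pi ->
  exists A : pred (vec n),
    ferrers (fun x => A x) /\ (forall x, A x -> img_sz sz x) /\
    (exists PA : S -> R,
       stationary_distribution (qpol sz q (det_policy R sz A)) PA /\
       forall g : S -> 'I_n -> R,
         admission_policy g -> balanced sz g ->
         forall Pg : S -> R, stationary_distribution (qpol sz q g) Pg ->
           Greward r Rw (qpol sz q g) Pg
           <= Greward r Rw (qpol sz q (det_policy R sz A)) PA) /\
    lp_optimal sz q Pi r Rw (GammaA sz Pi A).
Proof.
move=> [imgF [sz_emp [_ [q_ge0 q_struct]]]] [Srec [_ [_ [down _]]]] QR PiSt.
have Pi0 := PiSt.1.1.
have Pie : 0 < Pi emp.
  have [s Ps] := PiSt.2.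
  have Ps' : 0 < Pi s by rewrite lt0r Ps Pi0.
  have [p [pa lst]] := down s.
  rewrite -lst; apply: (prop_path q_ge0 PiSt.1 Ps'); apply: sub_path pa => a b /andP[] //.
have [A [ferA [Aimg opt]]] := lp_opt q r Rw imgF sz_emp Pi0 Pie.
exists A; split => //; split => //; split => //.
have kpos g : admission_policy g -> forall s t, 0 <= qpol sz q g s t.
  move=> ad s t; rewrite /qpol; apply: mulr_ge0 => //; case: pickP => // i _.
  by case/andP: (ad s i).
have reachg g : admission_policy g -> forall s, reach (fun a b => 0 < qpol sz q g a b) s emp.
  move=> ad s; have [p [pa lst]] := down s; exists p; split => //.
  apply: sub_path pa => a b /andP [qab le].
  rewrite /qpol; case: pickP => [i /eqP E|_]; last by rewrite mulr1.
  by exfalso; move: le; rewrite E (negbTE (vle_add_not _ _)).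
have HKA s i : img_sz sz (vadd (sz s) (unitv i)) ->
    GammaA sz Pi A (sz s) * det_policy R sz A s i = GammaA sz Pi A (vadd (sz s) (unitv i)).
  move=> _; rewrite /det_policy /GammaA; case h: (A (vadd (sz s) (unitv i))); last by rewrite !mulr0 mul0r.
  by rewrite (ferA.2 _ _ h (vle_add _ _)) mulr1.
have [[G0A [GmA NA]] optA] := opt.
have G0As s : 0 <= GammaA sz Pi A (sz s) := G0A _ (ex_intro _ s erefl).
pose PA := fun s => Pi s * GammaA sz Pi A (sz s).
have PAd : stationary_distribution (qpol sz q (det_policy R sz A)) PA.
  split; [exact: (stat_prod q_struct QR PiSt G0As HKA) | exact: NA].
exists PA; split => // g ad [_ [Gam [Gam0 [Gamnn GamK]]]] Pg Pgd.
pose Z := Nf sz Pi Gam.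
have Zp : 0 < Z.
  rewrite /Z /Nf (bigD1 emp) //= sz_emp Gam0 mulr1; apply: lt_le_trans Pie _.
  rewrite lerDl; apply: sumr_ge0 => s _; apply: mulr_ge0 => //; apply: Gamnn; by exists s.
pose Gn := fun x => Gam x / Z.
have Gn0 s : 0 <= Gn (sz s).
  rewrite /Gn; apply: divr_ge0; [apply: Gamnn; by exists s | exact: ltW].
have HKg s i : img_sz sz (vadd (sz s) (unitv i)) -> Gn (sz s) * g s i = Gn (vadd (sz s) (unitv i)).
  by move=> h; rewrite /Gn mulrAC GamK.
have NGn : \sum_s Pi s * Gn (sz s) = 1.
  have -> : \sum_s Pi s * Gn (sz s) = Z / Z.
    rewrite /Z /Nf mulr_suml; apply: eq_bigr => s _; by rewrite /Gn mulrA.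
  by rewrite mulfV // lt0r_neq0.
have Pgd' : stationary_distribution (qpol sz q g) (fun s => Pi s * Gn (sz s)).
  split; [exact: (stat_prod q_struct QR PiSt Gn0 HKg) | exact: NGn].
have Eg := uniq_dist (kpos g ad) (reachg g ad) Pgd' Pgd.
have -> : Greward r Rw (qpol sz q g) Pg = Greward r Rw (qpol sz q g) (fun s => Pi s * Gn (sz s)).
  rewrite /Greward; congr (_ + _); apply: eq_bigr => s _; first by rewrite Eg.
  by apply: eq_bigr => t _; rewrite Eg.
rewrite /PA (G_eq q Pi r Rw HKg) (G_eq q Pi r Rw HKA).
apply: optA; split; [|split] => //.
  by move=> x [s <-]; exact: Gn0.
move=> x i [s E] hi; rewrite -E; rewrite -E in hi.
rewrite /Gn ler_pM2r ?invr_gt0 // -GamK //; apply: ler_piMr.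
  by apply: Gamnn; exists s.
by case/andP: (ad s i).
Qed.
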